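(* Let $n$ DMUs, indexed by $J$, each use $m$ inputs (indexed by $I$) and produce $s$ outputs (indexed by $R$), with $n\ge 2(m+s)$ and all data $x_{ij}>0$, $y_{rj}>0$. Fix $o\in J$ and let $(Q_o^\star,P_o^\star,\pi^\star)$ be an optimal solution of the TAP program of the PT model $$\max\ \sum_{i\in I}Q_{io}\tau_o+\sum_{r\in R}P_{ro}\tau_o\quad\text{s.t.}\quad \sum_{j\in J}x_{ij}\pi_{jo}+Q_{io}x_{io}=x_{io}\ (i\in I),\ \ -\sum_{j\in J}y_{rj}\pi_{jo}+P_{ro}y_{ro}=-y_{ro}\ (r\in R),\ \ \pi_o,Q_o,P_o\ge0,$$ with goal price $\tau_o>0$. Define the benchmarks $\widehat x_{io}=\sum_{j\in J}x_{ij}\pi^\star_{jo}=x_{io}(1-Q^\star_{io})$ and $\widehat y_{ro}=\sum_{j\in J}y_{rj}\pi^\star_{jo}=y_{ro}(1+P^\star_{ro})$. Then assessing DMU-$o$ with the adjusted inputs $\widehat x_{io}$ and outputs $\widehat y_{ro}$ in place of $x_{io},y_{ro}$ by the PT model yields PT efficiency $\widehat E_o^{PT\star}=1$.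
   Context: The PT model's TVG (primal) program for an evaluated DMU with data $(x_{io},y_{ro})$ is $\min\sum_i v_{io}x_{io}-\sum_r u_{ro}y_{ro}$ s.t. $\sum_i v_{io}x_{ij}-\sum_r u_{ro}y_{rj}\ge0$ ($j\in J$), $x_{io}v_{io}\ge\tau_o$ ($i\in I$), $y_{ro}u_{ro}\ge\tau_o$ ($r\in R$), $v_o,u_o$ free. With an optimal solution $(v_o^\#,u_o^\#)$ for $\tau_o=1$, set $\bar t=1/\sum_i v^\#_{io}x_{io}$ and $(v_o^\star,u_o^\star)=\bar t(v_o^\#,u_o^\#)$; the PT efficiency is $E_o^{PT\star}=\sum_r u^\star_{ro}y_{ro}/\sum_i v^\star_{io}x_{io}$, equivalently $1$ minus (optimal total virtual gap)/(virtual input). *)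

(* Defs.v *)
From mathcomp Require Import all_boot all_order all_algebra.
Set Implicit Arguments. Unset Strict Implicit. Unset Printing Implicit Defensive.
Import Order.TTheory GRing.Theory Num.Theory.
Local Open Scope ring_scope.

Section PT.
Variables (R : realFieldType) (m s n : nat).
Implicit Types (X : 'I_m -> 'I_n -> R) (Y : 'I_s -> 'I_n -> R) (o : 'I_n).

Definition TAP_feasible X Y o (pi : 'I_n -> R) (Q : 'I_m -> R) (P : 'I_s -> R) :=
  [/\ (forall i, \sum_(j < n) X i j * pi j + Q i * X i o = X i o),
      (forall r, - (\sum_(j < n) Y r j * pi j) + P r * Y r o = - Y r o),
      (forall j, 0 <= pi j), (forall i, 0 <= Q i) & (forall r, 0 <= P r)].

Definition TAP_obj (tau : R) (Q : 'I_m -> R) (P : 'I_s -> R) :=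
  \sum_(i < m) Q i * tau + \sum_(r < s) P r * tau.

Definition TAP_optimal X Y o tau pi Q P :=
  TAP_feasible X Y o pi Q P /\
  forall pi' Q' P', TAP_feasible X Y o pi' Q' P' -> TAP_obj tau Q' P' <= TAP_obj tau Q P.

Definition TVG_feasible X Y o (tau : R) (v : 'I_m -> R) (u : 'I_s -> R) :=
  [/\ (forall j, 0 <= \sum_(i < m) v i * X i j - \sum_(r < s) u r * Y r j),
      (forall i, tau <= X i o * v i) & (forall r, tau <= Y r o * u r)].

Definition TVG_obj X Y o (v : 'I_m -> R) (u : 'I_s -> R) :=
  \sum_(i < m) v i * X i o - \sum_(r < s) u r * Y r o.

Definition TVG_optimal X Y o tau v u :=
  TVG_feasible X Y o tau v u /\
  forall v' u', TVG_feasible X Y o tau v' u' -> TVG_obj X Y o v u <= TVG_obj X Y o v' u'.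

(* PT efficiency of DMU o: from an optimal (v#,u#) for tau = 1, set
   tbar = 1 / sum_i v#_i x_io, vstar = tbar v#, ustar = tbar u#, E = (sum ustar y) / (sum vstar x).
   "The PT efficiency equals e" : an optimal solution exists (so E is defined)
   and every optimal solution yields the value e. *)
Definition PT_efficiency_is X Y o (e : R) :=
  (exists v u, TVG_optimal X Y o 1 v u) /\
  forall v u, TVG_optimal X Y o 1 v u ->
    let tbar := 1 / (\sum_(i < m) v i * X i o) in
    (\sum_(r < s) (tbar * u r) * Y r o) / (\sum_(i < m) (tbar * v i) * X i o) = e.

Definition adjX X o (pi : 'I_n -> R) : 'I_m -> 'I_n -> R :=
  fun i j => if j == o then \sum_(k < n) X i k * pi k else X i j.
Definition adjY Y o (pi : 'I_n -> R) : 'I_s -> 'I_n -> R :=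
  fun r j => if j == o then \sum_(k < n) Y r k * pi k else Y r j.

End PT.

(* Main.v *)
Require Import Defs.
From mathcomp Require Import all_boot all_order all_algebra.
From mathcomp Require Import ring lra.
Set Implicit Arguments. Unset Strict Implicit. Unset Printing Implicit Defensive.
Import Order.TTheory GRing.Theory Num.Theory.
Local Open Scope ring_scope.

Section Farkas.
Variable R : realFieldType.

Definition FMlift (I : finType) (a g : I -> R) : (I + I * I)%type -> R :=
  fun k => match k with
  | inl k => (a k == 0)%:R * g k
  | inr pq => ((0 < a pq.1) && (a pq.2 < 0))%:R * ((- a pq.2) * g pq.1 + a pq.1 * g pq.2)
  end.

Definition FMlam (I : finType) (a : I -> R) (lam' : (I + I * I)%type -> R) : I -> R :=
  fun k => lam' (inl k) * (a k == 0)%:R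
    + \sum_q lam' (inr (k, q)) * (((0 < a k) && (a q < 0))%:R * - a q)
    + \sum_p lam' (inr (p, k)) * (((0 < a p) && (a k < 0))%:R * a p).

Lemma FM_sum (I : finType) (a g : I -> R) lam' :
  \sum_k' lam' k' * FMlift a g k' = \sum_k FMlam a lam' k * g k.
Proof.
rewrite big_sumType /=.
rewrite /FMlam.
under [RHS]eq_bigr do rewrite !mulrDl.
rewrite !big_split /= -addrA; congr (_ + _).
  by apply: eq_bigr => k _; rewrite mulrA.
transitivity (\sum_p \sum_q (lam' (inr (p, q)) * ((0 < a p) && (a q < 0))%:R * - a q * g p
   + lam' (inr (p, q)) * ((0 < a p) && (a q < 0))%:R * a p * g q)).
  by rewrite pair_bigA; apply: eq_bigr => [[p q]] _ /=; ring.
rewrite (eq_bigr _ (fun p _ => big_split _ _ _ _ _)) /=.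
rewrite big_split /=; congr (_ + _).
  apply: eq_bigr => p _; rewrite mulr_suml; apply: eq_bigr => q _; ring.
rewrite exchange_big /=; apply: eq_bigr => q _; rewrite mulr_suml.
by apply: eq_bigr => p _; ring.
Qed.


Lemma FM_lin (I : finType) (a : I -> R) (A : I -> nat -> R) (w : nat -> R) d k' :
  \sum_(i < d) FMlift a (fun k => A k i) k' * w i =
  FMlift a (fun k => \sum_(i < d) A k i * w i) k'.
Proof.
case: k' => [k|[p q]] /=.
  by rewrite mulr_sumr; apply: eq_bigr => i _; rewrite mulrA.
rewrite !mulr_sumr -big_split mulr_sumr /=; apply: eq_bigr => i _; ring.
Qed.

Lemma farkas d : forall (I : finType) (A : I -> nat -> R) (b : I -> R),
  (exists w : nat -> R, forall k, b k <= \sum_(i < d) A k i * w i) \/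
  (exists lam : I -> R, (forall k, 0 <= lam k) /\
     (forall i, (i < d)%N -> \sum_k lam k * A k i = 0) /\ 0 < \sum_k lam k * b k).
Proof.
elim: d => [|d IH] I A b.
  case: (boolP [exists k, 0 < b k]) => [/existsP [k bk]|].
    right; exists (fun j => (j == k)%:R); split => [j|]; first by rewrite ler0n.
    split => // .
    rewrite (bigD1 k) //= eqxx mul1r big1 ?addr0 // => j /negbTE ->.
    by rewrite mul0r.
  move/existsPn => H; left; exists (fun _ => 0) => k.
  by rewrite big_ord0 leNgt H.
pose a k := A k d.
pose A' k' i := FMlift a (fun k => A k i) k'.
pose b' := FMlift a b.
case: (IH _ A' b') => [[w Hw]|[lam' [lam'0 [Hlam' Hb']]]].
  pose S k := \sum_(i < d) A k i * w i.
  have Hw' : forall k', b' k' <= FMlift a S k'.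
    by move=> k'; rewrite /S -FM_lin; apply: Hw.
  pose L p := (b p - S p) / a p.
  pose U q := (S q - b q) / (- a q).
  have LU : forall p q, 0 < a p -> a q < 0 -> L p <= U q.
    move=> p q hp hq; have := Hw' (inr (p, q)); rewrite /b' /= hp hq /= !mul1r => H.
    rewrite /L /U ler_pdivlMr ?oppr_gt0 // mulrAC ler_pdivrMr //.
    rewrite -subr_ge0.
    have -> : (S q - b q) * a p - (b p - S p) * - a q
       = (- a q * S p + a p * S q) - (- a q * b p + a p * b q) by ring.
    by rewrite subr_ge0.
  pose m0 := \big[Num.min/0]_(q | a q < 0) U q.
  pose t := \big[Num.max/m0]_(p | 0 < a p) L p.
  have Lt : forall p, 0 < a p -> L p <= t.
    by move=> p hp; apply: le_bigmax_cond.
  have tU : forall q, a q < 0 -> t <= U q.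
    move=> q hq; apply: bigmax_le; first by apply: bigmin_le_cond.
    by move=> p hp; apply: LU.
  left; exists (fun i => if i == d then t else w i) => k.
  rewrite big_ord_recr /= eqxx.
  rewrite (eq_bigr (fun i : 'I_d => A k i * w i)); last first.
    by move=> i _; rewrite /= ltn_eqF.
  rewrite -/(S k).
  have [hk|hk|hk] := ltgtP (A k d) 0.
  - have := tU k hk; rewrite /U ler_pdivlMr ?oppr_gt0 // => h.
    move: h; rewrite /a /= => h; lra.
  - have := Lt k hk; rewrite /L ler_pdivrMr // => h.
    move: h; rewrite /a /= => h; lra.
  - have := Hw' (inl k); rewrite /b' /= /a hk eqxx !mul1r => h.
    by rewrite mul0r addr0.
right; exists (FMlam a lam'); split.
  move=> k; rewrite /FMlam; apply: addr_ge0; first apply: addr_ge0.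
  - by apply: mulr_ge0; rewrite ?ler0n.
  - apply: sumr_ge0 => q _; apply: mulr_ge0 => //.
    case: andP => [[_ h]|_]; last by rewrite mul0r.
    by rewrite mul1r oppr_ge0 ltW.
  - apply: sumr_ge0 => p _; apply: mulr_ge0 => //.
    case: andP => [[h _]|_]; last by rewrite mul0r.
    by rewrite mul1r ltW.
split; last by rewrite -FM_sum.
move=> i; rewrite ltnS leq_eqVlt => /orP [/eqP ->|hi].
  rewrite -(FM_sum a (fun k => A k d)) big1 // => k' _.
  case: k' => [k|[p q]] /=.
    rewrite /a /=; have [->|_] := eqVneq (A k d) 0; by rewrite !(mulr0, mul0r).
  by rewrite [X in _ * (_ * X)](_ : _ = 0) ?mulr0 //; rewrite /a /=; ring.
by rewrite -(FM_sum a (fun k => A k i)); apply: Hlam'.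
Qed.

Section Vec.
Variables (m s : nat).
Definition vecc (f : 'I_m -> R) (g : 'I_s -> R) : nat -> R := fun i =>
  match (insub i : option 'I_m) with
  | Some k => f k
  | None => match (insub (i - m)%N : option 'I_s) with Some r => g r | None => 0 end
  end.

Lemma vecc_l f g (i : 'I_m) : vecc f g i = f i.
Proof. by rewrite /vecc valK. Qed.

Lemma vecc_r f g (r : 'I_s) : vecc f g (m + r) = g r.
Proof. by rewrite /vecc insubF ?ltnNge ?leq_addr // addKn valK. Qed.

Lemma sum_vecc f g (w : nat -> R) :
  \sum_(i < m + s) vecc f g i * w i =
  \sum_(i < m) f i * w i + \sum_(r < s) g r * w (m + r)%N.
Proof.
rewrite big_split_ord /=; congr (_ + _); apply: eq_bigr => i _ /=.
  by rewrite vecc_l.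
by rewrite vecc_r.
Qed.
End Vec.
End Farkas.

Unset Implicit Arguments.
Set Strict Implicit.

Theorem theorem2 (R : realFieldType) (m s n : nat)
  (X : 'I_m -> 'I_n -> R) (Y : 'I_s -> 'I_n -> R) (o : 'I_n) (tau : R)
  (pi : 'I_n -> R) (Q : 'I_m -> R) (P : 'I_s -> R) :
  (0 < m)%N -> (0 < s)%N -> (2 * (m + s) <= n)%N ->
  (forall i j, 0 < X i j) -> (forall r j, 0 < Y r j) ->
  0 < tau ->
  TAP_optimal X Y o tau pi Q P ->
  PT_efficiency_is (adjX X o pi) (adjY Y o pi) o 1.
Proof.
move=> hm hs _ hX hY htau [[HX HY hpi hQ hP] Hopt].
pose xh i := \sum_(k < n) X i k * pi k.
pose yh r := \sum_(k < n) Y r k * pi k.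
pose X' := adjX X o pi. pose Y' := adjY Y o pi.
have X'o i : X' i o = xh i by rewrite /X' /adjX eqxx.
have Y'o r : Y' r o = yh r by rewrite /Y' /adjY eqxx.
have obj_ge0 : forall v u, TVG_feasible X' Y' o 1 v u -> 0 <= TVG_obj X' Y' o v u.
  by move=> v u [H _ _]; apply: H.
suff [v0 [u0 [F0 O0]]] : exists v u, TVG_feasible X' Y' o 1 v u /\ TVG_obj X' Y' o v u <= 0.
  split.
    exists v0, u0; split => // v' u' F'.
    by apply: le_trans O0 (obj_ge0 _ _ F').
  move=> v u [Fe Op] /=.
  have obj0 : TVG_obj X' Y' o v u = 0.
    apply/eqP; rewrite eq_le obj_ge0 // andbT.
    by apply: le_trans (Op _ _ F0) O0.
  set V := \sum_(i < m) v i * X' i o.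
  set U := \sum_(r < s) u r * Y' r o.
  have UV : U = V by move: obj0; rewrite /TVG_obj -/U -/V => /eqP; rewrite subr_eq0 => /eqP.
  have Vpos : 0 < V.
    case: Fe => _ Hi _.
    apply: (@lt_le_trans _ _ (\sum_(i < m) (1 : R))).
      by rewrite sumr_const card_ord ltr0n.
    by apply: ler_sum => i _; rewrite mulrC; apply: Hi.
  have E1 : forall (t : R) (k : nat) (f g : 'I_k -> R), \sum_(r < k) (t * f r) * g r = t * \sum_(r < k) f r * g r.
    by move=> t k f g; rewrite mulr_sumr; apply: eq_bigr => r _; rewrite mulrA.
  rewrite !E1 -/U -/V UV divff // mulf_neq0 //; first by rewrite div1r invr_eq0 lt0r_neq0.
  by rewrite lt0r_neq0.
pose I := ((('I_n + 'I_1) + 'I_m) + 'I_s)%type.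
pose Fk (k : I) : 'I_m -> R := match k with
  | inl (inl (inl j)) => fun i => X i j
  | inl (inl (inr _)) => fun i => - xh i
  | inl (inr i0) => fun i => if i == i0 then xh i else 0
  | inr _ => fun _ => 0 end.
pose Gk (k : I) : 'I_s -> R := match k with
  | inl (inl (inl j)) => fun r => - Y r j
  | inl (inl (inr _)) => fun r => yh r
  | inl (inr _) => fun _ => 0
  | inr r0 => fun r => if r == r0 then yh r else 0 end.
pose bk (k : I) : R := match k with
  | inl (inl _) => 0
  | _ => 1 end.
pose A (k : I) : nat -> R := vecc (Fk k) (Gk k).
have sumv (f : 'I_m -> R) (v : 'I_m -> R) : \sum_i f i * v i = \sum_i v i * f i.
  by apply: eq_bigr => i _; rewrite mulrC.
have sumu (f : 'I_s -> R) (v : 'I_s -> R) : \sum_i f i * v i = \sum_i v i * f i.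
  by apply: eq_bigr => i _; rewrite mulrC.
have xhsum (v : 'I_m -> R) :
    \sum_i v i * xh i = \sum_k pi k * \sum_i v i * X i k.
  rewrite /xh; under eq_bigr do rewrite mulr_sumr.
  rewrite exchange_big /=; apply: eq_bigr => k _; rewrite mulr_sumr.
  by apply: eq_bigr => i _; ring.
have yhsum (u : 'I_s -> R) :
    \sum_r u r * yh r = \sum_k pi k * \sum_r u r * Y r k.
  rewrite /yh; under eq_bigr do rewrite mulr_sumr.
  rewrite exchange_big /=; apply: eq_bigr => k _; rewrite mulr_sumr.
  by apply: eq_bigr => i _; ring.
case: (@farkas R (m + s) I A bk) => [[w Hw]|[lam [lam0 [Hlam Hb]]]].
  pose v (i : 'I_m) := w i. pose u (r : 'I_s) := w (m + r)%N.
  have Hw' k : bk k <= \sum_i Fk k i * v i + \sum_r Gk k r * u r.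
    by rewrite -sum_vecc; apply: Hw.
  have hj j : 0 <= \sum_i v i * X i j - \sum_r u r * Y r j.
    have := Hw' (inl (inl (inl j))); rewrite /= sumv sumu.
    by under [X in _ <= _ + X]eq_bigr do rewrite mulrN; rewrite sumrN.
  exists v, u; split; first split.
  - move=> j; rewrite /X' /Y' /adjX /adjY.
    case: eqP => _; last exact: hj.
    rewrite xhsum yhsum -sumrB; apply: sumr_ge0 => k _.
    by rewrite -mulrBr; apply: mulr_ge0.
  - move=> i0; rewrite X'o.
    have := Hw' (inl (inr i0)); rewrite /= [X in _ + X]big1 ?addr0; last by move=> r _; rewrite mul0r.
    rewrite (bigD1 i0) //= eqxx big1 ?addr0 // => i /negbTE -> .
    by rewrite mul0r.
  - move=> r0; rewrite Y'o.
    have := Hw' (inr r0); rewrite /= [X in X + _]big1 ?add0r; last by move=> i _; rewrite mul0r.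
    rewrite (bigD1 r0) //= eqxx big1 ?addr0 // => r /negbTE -> .
    by rewrite mul0r.
  - have := Hw' (inl (inl (inr ord0))); rewrite /= /TVG_obj.
    under eq_bigr do rewrite mulNr; rewrite sumrN.
    under [\sum_(i < m) v i * X' i o]eq_bigr do rewrite X'o.
    under [\sum_(r < s) u r * Y' r o]eq_bigr do rewrite Y'o.
    rewrite sumv sumu => h; lra.
pose lamj j := lam (inl (inl (inl j))).
pose mu := lam (inl (inl (inr ord0))).
pose al i := lam (inl (inr i)).
pose be r := lam (inr r).
have split_sum (H : I -> R) : \sum_k H k = \sum_j H (inl (inl (inl j))) + H (inl (inl (inr ord0)))
    + \sum_i H (inl (inr i)) + \sum_r H (inr r).
  by rewrite !big_sumType big_ord1.
have eqX i0 : \sum_j lamj j * X i0 j - mu * xh i0 + al i0 * xh i0 = 0.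
  have := Hlam i0 (ltn_addr s (ltn_ord i0)).
  rewrite /A; under eq_bigr do rewrite vecc_l.
  rewrite split_sum /=.
  rewrite [X in _ + X]big1 ?addr0; last by move=> r _; rewrite mulr0.
  rewrite (bigD1 i0) //= eqxx [X in _ + (_ + X)]big1 ?addr0; last first.
    by move=> i hi; rewrite eq_sym (negbTE hi) mulr0.
  by rewrite mulrN.
have eqY r0 : - \sum_j lamj j * Y r0 j + mu * yh r0 + be r0 * yh r0 = 0.
  have hr0 : (m + r0 < m + s)%N by rewrite ltn_add2l.
  have := Hlam (m + r0)%N hr0.
  rewrite /A; under eq_bigr do rewrite vecc_r.
  rewrite split_sum /=.
  rewrite [X in _ + X + _]big1 ?addr0; last by move=> i _; rewrite mulr0.
  rewrite (bigD1 r0) //= eqxx [X in _ + (_ + X)]big1 ?addr0; last first.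
    by move=> r hr; rewrite eq_sym (negbTE hr) mulr0.
  by under eq_bigr do rewrite mulrN; rewrite sumrN.
have Hab : 0 < \sum_i al i + \sum_r be r.
  move: Hb; rewrite split_sum /= big1 ?mulr0 ?add0r; last by move=> j _; rewrite mulr0.
  by under eq_bigr do rewrite mulr1; under [X in _ + X]eq_bigr do rewrite mulr1.
have hxh i : xh i = X i o * (1 - Q i).
  have := HX i; rewrite -/(xh i) => h; lra.
have hyh r : yh r = Y r o * (1 + P r).
  have := HY r; rewrite -/(yh r) => h; lra.
have [j0 hj0] : exists j, 0 < pi j.
  case: (boolP [exists j, 0 < pi j]) => [/existsP //|/existsPn Hn].
  have r0 := Ordinal hs.
  have y0 : yh r0 = 0.
    rewrite /yh big1 // => j _.
    have -> : pi j = 0 by apply/le_anti; rewrite hpi andbT leNgt Hn.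
    by rewrite mulr0.
  have : 0 < yh r0.
    rewrite hyh; apply: mulr_gt0 => //; have := hP r0; lra.
  by rewrite y0 ltxx.
have xh_gt0 i : 0 < xh i.
  rewrite /xh (bigD1 j0) //=.
  apply: (@lt_le_trans _ _ (X i j0 * pi j0)); first by apply: mulr_gt0.
  rewrite lerDl; apply: sumr_ge0 => j _; apply: mulr_ge0; [exact: ltW|exact: hpi].
have oneQ i : 0 < 1 - Q i by have := xh_gt0 i; rewrite hxh pmulr_rgt0.
have oneP r : 0 < 1 + P r by have := hP r; lra.
have mu0 : 0 <= mu by apply: lam0.
have hmu : 1 + mu != 0 by apply: lt0r_neq0; lra.
pose eps := (1 + mu)^-1.
have epsp : 0 < eps by rewrite /eps invr_gt0; lra.
pose pi2 j := eps * (pi j + lamj j).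
pose Q2 i := Q i + eps * al i * (1 - Q i).
pose P2 r := P r + eps * be r * (1 + P r).
have F2 : TAP_feasible X Y o pi2 Q2 P2.
  split.
  - move=> i.
    have -> : \sum_j X i j * pi2 j = eps * (xh i + \sum_j lamj j * X i j).
      rewrite /xh mulrDr !mulr_sumr -big_split /=; apply: eq_bigr => j _.
      rewrite /pi2; ring.
    have := eqX i => E.
    have -> : \sum_j lamj j * X i j = mu * xh i - al i * xh i by lra.
    rewrite /Q2 /eps hxh; field; exact: hmu.
  - move=> r.
    have -> : \sum_j Y r j * pi2 j = eps * (yh r + \sum_j lamj j * Y r j).
      rewrite /yh mulrDr !mulr_sumr -big_split /=; apply: eq_bigr => j _.
      rewrite /pi2; ring.
    have := eqY r => E.
    have -> : \sum_j lamj j * Y r j = mu * yh r + be r * yh r by lra.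
    rewrite /P2 /eps hyh; field; exact: hmu.
  - move=> j; rewrite /pi2; apply: mulr_ge0; first exact: ltW.
    exact: addr_ge0 (hpi j) (lam0 _).
  - move=> i; rewrite /Q2; apply: addr_ge0; first exact: hQ.
    by apply: mulr_ge0; [apply: mulr_ge0; [exact: ltW|exact: lam0]|exact: ltW].
  - move=> r; rewrite /P2; apply: addr_ge0; first exact: hP.
    by apply: mulr_ge0; [apply: mulr_ge0; [exact: ltW|exact: lam0]|exact: ltW].
have := Hopt _ _ _ F2.
have -> : TAP_obj tau Q2 P2 = TAP_obj tau Q P
    + tau * eps * (\sum_i al i * (1 - Q i) + \sum_r be r * (1 + P r)).
  rewrite /TAP_obj mulrDr !mulr_sumr addrACA -!big_split /=.
  by congr (_ + _); apply: eq_bigr => k _; rewrite /Q2 /P2; ring.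
rewrite gerDl pmulr_rle0 ?mulr_gt0 // => Hle.
have S1 : 0 <= \sum_i al i * (1 - Q i).
  by apply: sumr_ge0 => i _; apply: mulr_ge0; [exact: lam0|exact: ltW].
have S2 : 0 <= \sum_r be r * (1 + P r).
  by apply: sumr_ge0 => r _; apply: mulr_ge0; [exact: lam0|exact: ltW].
have Z1 : \sum_i al i = 0.
  have H0 : \sum_i al i * (1 - Q i) = 0 by lra.
  apply: big1 => i _.
  have /eqP := @psumr_eq0P _ _ (fun _ => true) (fun i => al i * (1 - Q i))
    (fun k _ => mulr_ge0 (lam0 _) (ltW (oneQ k))) H0 i isT.
  by rewrite mulf_eq0 (negbTE (lt0r_neq0 (oneQ i))) orbF => /eqP.
have Z2 : \sum_r be r = 0.
  have H0 : \sum_r be r * (1 + P r) = 0 by lra.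
  apply: big1 => r _.
  have /eqP := @psumr_eq0P _ _ (fun _ => true) (fun r => be r * (1 + P r))
    (fun k _ => mulr_ge0 (lam0 _) (ltW (oneP k))) H0 r isT.
  by rewrite mulf_eq0 (negbTE (lt0r_neq0 (oneP r))) orbF => /eqP.
by move: Hab; rewrite Z1 Z2 addr0 ltxx.
Qed.
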